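(* In any execution of temporal BFS on a temporal graph $G=(V,E)$ from source $s$ with starting time $t_s$, at every moment the queue $Q$ contains at most two records whose vertex is any given $v\in V$.
   Context: A temporal graph is a pair $G=(V,E)$ where $V$ is a finite set of vertices and $E$ is a finite set of temporal edges, i.e. triples $(u,v,t)$ with $u,v\in V$, $u\neq v$, $t\in\mathbb{R}$ (the time at which the edge is active); distinct elements of $E$ are distinct triples. Fix $t_s\in\mathbb{R}$ and $s\in V$. Temporal BFS. Records are tuples $(x,d,\tau,p)$ (vertex $x$, level $d$, time $\tau$, predecessor record $p$ or none); every record ever created is an occurrence (node) of the BFS tree $T$, rooted at the initial record, with a tree edge from the predecessor record to the record; the level and time of an occurrence are the final values of its fields. For each $x\in V$ a current value $\sigma(x)$ is kept, initially $\infty$, and set to $\tau$ whenever a record of $x$ is created or its time is updated to $\tau$. Initially the FIFO queue $Q$ contains only $(s,0,t_s,\text{none})$ and $\sigma(s)=t_s$; no edge is traversed. While $Q\neq\emptyset$: pop the front record $R=(u,d_u,\sigma_u,p_u)$; let $B$ be the set of edges $(u,v,t)\in E$ not yet traversed with $\sigma_u\le t$; for each vertex $v$ such that $B$ contains an edge to $v$ (in any order), let $e=(u,v,t)$ be the edge of $B$ to $v$ with smallest $t$, mark $e$ traversed, and: (i) if $Q$ contains no record of $v$ and $\sigma(v)>t$, create $(v,d_u+1,t,R)$ and append it to $Q$; (ii) if $Q$ contains a record of $v$ with level $d_u+1$ and $\sigma(v)>t$, set that record's time to $t$ and predecessor to $R$; (iii) if $Q$ contains a record of $v$ but none with level $d_u+1$,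 and $\sigma(v)>t$, create $(v,d_u+1,t,R)$ and append it to $Q$. *)

(* Defs.v *)
From Stdlib Require Import Reals List.
Import ListNotations.
Open Scope R_scope.

Set Implicit Arguments.

Definition tedge (V : Type) := (V * V * R)%type.

Section TemporalBFS.
Context {V : Type}.

(* A BFS record (x, d, tau, p); each record carries a unique identifier
   [rid], and the predecessor field stores the identifier of the
   predecessor record (None = "none"). *)
Record rec := mkRec {
  rid   : nat;
  rv    : V;
  rlev  : nat;
  rtime : R;
  rpred : option nat }.

(* sigma(x) \in R \cup {infinity}; None encodes infinity. *)
Definition gt_opt (o : option R) (t : R) : Prop :=
  match o with None => True | Some x => t < x end.

Definition sig_upd (sig : V -> option R) (v : V) (t : R) (sig' : V -> option R) :=
  sig' v = Some t /\ forall x, x <> v -> sig' x = sig x.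

(* Algorithm state:
   sQ     : the FIFO queue (front = head of the list)
   ssig   : the current values sigma
   strav  : the edges traversed so far
   snext  : fresh identifier for the next created record
   scur   : None between iterations of the while loop; otherwise
            Some (R, B, vs) when the popped record R is being processed,
            B is the edge set computed at the pop, and vs is the list
            of vertices still to be handled by the inner "for each" loop. *)
Record state := mkState {
  sQ    : list rec;
  ssig  : V -> option R;
  strav : list (tedge V);
  snext : nat;
  scur  : option (rec * (tedge V -> Prop) * list V) }.

Definition init_state (s : V) (ts : R) (st : state) : Prop :=
  sQ st = [mkRec 0 s 0 ts None] /\
  ssig st s = Some ts /\ (forall x, x <> s -> ssig st x = None) /\
  strav st = [] /\ snext st = 1%nat /\ scur st = None.

(* One atomic action of the algorithm (nondeterministic: the order in
   which the vertices of B are handled is arbitrary). *)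
Inductive step (E : list (tedge V)) : state -> state -> Prop :=
| step_pop : forall R0 Q sig trav nx (vs : list V),
    let B := fun e : tedge V =>
      In e E /\ ~ In e trav /\ fst (fst e) = rv R0 /\ rtime R0 <= snd e in
    NoDup vs ->
    (forall v, In v vs <-> exists t, B (rv R0, v, t)) ->
    step E (mkState (R0 :: Q) sig trav nx None)
           (mkState Q sig trav nx (Some (R0, B, vs)))
| step_done : forall R0 B Q sig trav nx,
    step E (mkState Q sig trav nx (Some (R0, B, [])))
           (mkState Q sig trav nx None)
| step_create_new : forall R0 (B : tedge V -> Prop) v vs t Q sig sig' trav nx,
    B (rv R0, v, t) -> (forall t', B (rv R0, v, t') -> t <= t') ->
    (forall r, In r Q -> rv r <> v) -> gt_opt (sig v) t ->
    sig_upd sig v t sig' ->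
    step E (mkState Q sig trav nx (Some (R0, B, v :: vs)))
           (mkState (Q ++ [mkRec nx v (S (rlev R0)) t (Some (rid R0))]) sig'
                    ((rv R0, v, t) :: trav) (S nx) (Some (R0, B, vs)))
| step_update : forall R0 (B : tedge V -> Prop) v vs t Q1 r Q2 sig sig' trav nx,
    B (rv R0, v, t) -> (forall t', B (rv R0, v, t') -> t <= t') ->
    rv r = v -> rlev r = S (rlev R0) -> gt_opt (sig v) t ->
    sig_upd sig v t sig' ->
    step E (mkState (Q1 ++ r :: Q2) sig trav nx (Some (R0, B, v :: vs)))
           (mkState (Q1 ++ mkRec (rid r) v (rlev r) t (Some (rid R0)) :: Q2) sig'
                    ((rv R0, v, t) :: trav) nx (Some (R0, B, vs)))
| step_create_level : forall R0 (B : tedge V -> Prop) v vs t Q sig sig' trav nx,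
    B (rv R0, v, t) -> (forall t', B (rv R0, v, t') -> t <= t') ->
    (exists r, In r Q /\ rv r = v) ->
    (forall r, In r Q -> rv r = v -> rlev r <> S (rlev R0)) ->
    gt_opt (sig v) t ->
    sig_upd sig v t sig' ->
    step E (mkState Q sig trav nx (Some (R0, B, v :: vs)))
           (mkState (Q ++ [mkRec nx v (S (rlev R0)) t (Some (rid R0))]) sig'
                    ((rv R0, v, t) :: trav) (S nx) (Some (R0, B, vs)))
| step_skip : forall R0 (B : tedge V -> Prop) v vs t Q sig trav nx,
    B (rv R0, v, t) -> (forall t', B (rv R0, v, t') -> t <= t') ->
    ~ ((forall r, In r Q -> rv r <> v) /\ gt_opt (sig v) t) ->
    ~ ((exists r, In r Q /\ rv r = v /\ rlev r = S (rlev R0)) /\ gt_opt (sig v) t) ->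
    ~ ((exists r, In r Q /\ rv r = v) /\
       (forall r, In r Q -> rv r = v -> rlev r <> S (rlev R0)) /\
       gt_opt (sig v) t) ->
    step E (mkState Q sig trav nx (Some (R0, B, v :: vs)))
           (mkState Q sig ((rv R0, v, t) :: trav) nx (Some (R0, B, vs))).

Inductive reachable (E : list (tedge V)) (st0 : state) : state -> Prop :=
| reach_refl : reachable E st0 st0
| reach_step : forall st st', reachable E st0 st -> step E st st' ->
    reachable E st0 st'.

Definition at_most_two_of (Q : list rec) (v : V) : Prop :=
  forall (i j k : nat) (r1 r2 r3 : rec),
    (i < j)%nat -> (j < k)%nat ->
    nth_error Q i = Some r1 -> nth_error Q j = Some r2 -> nth_error Q k = Some r3 ->
    rv r1 = v -> rv r2 = v -> rv r3 = v -> False.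

End TemporalBFS.

(* Main.v *)
Require Import Defs.
From Stdlib Require Import Reals List Lia.
Import ListNotations.

Definition Pk {V : Type} (a b : V * nat) : Prop :=
  (snd a <= snd b)%nat /\ (fst a = fst b -> snd a <> snd b).

Definition key {V : Type} (r : @rec V) : V * nat := (rv r, rlev r).

Lemma fop_app {A} (P : A -> A -> Prop) l x :
  ForallOrdPairs P l -> (forall y, In y l -> P y x) -> ForallOrdPairs P (l ++ [x]).
Proof.
  induction l as [|a l IH]; intros H Hy; simpl.
  - constructor; constructor.
  - inversion H; subst. constructor.
    + apply Forall_app; split; auto. constructor; auto. apply Hy; simpl; auto.
    + apply IH; auto. intros; apply Hy; simpl; auto.
Qed.

Lemma fop_nth {A} (P : A -> A -> Prop) l : ForallOrdPairs P l ->
  forall i j a b, (i < j)%nat -> nth_error l i = Some a -> nth_error l j = Some b -> P a b.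
Proof.
  induction 1 as [|x l Hf Hl IH]; intros i j a b Hij Hi Hj.
  - destruct i; discriminate.
  - destruct j as [|j]; [lia|]. simpl in Hj.
    destruct i as [|i]; simpl in Hi.
    + injection Hi; intros; subst. rewrite Forall_forall in Hf. apply Hf.
      eapply nth_error_In; eauto.
    + apply (IH i j); auto; lia.
Qed.

Definition Inv {V : Type} (st : @state V) : Prop :=
  ForallOrdPairs Pk (map key (sQ st)) /\
  exists d, (forall r, In r (sQ st) -> (d <= rlev r <= S d)%nat) /\
    (forall R0 B vs, scur st = Some (R0, B, vs) -> d = rlev R0).

Lemma inv_step {V : Type} (E : list (tedge V)) st st' : Inv st -> step E st st' -> Inv st'.
Proof.
  intros [Hf [d [Hr Hc]]] Hs; destruct Hs as [R0|R0|R0|R0|R0|R0]; unfold Inv; cbn [sQ scur] in *.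
  - inversion Hf; subst. split; auto.
    exists (rlev R0). split; [|intros R1 B1 vs1 Heq; injection Heq; intros; subst; auto].
    intros r Hin. assert (d <= rlev R0 <= S d)%nat by (apply Hr; simpl; auto).
    assert (rlev r <= S d)%nat by (apply Hr; simpl; auto).
    match goal with HH : Forall _ (map key Q) |- _ => rewrite Forall_forall in HH;
    assert (HP : Pk (key R0) (key r)) by (apply HH; apply in_map; auto) end.
    destruct HP. simpl in *. lia.
  - split; auto. exists d; split; auto. intros; discriminate.
  - assert (d = rlev R0) by (eapply Hc; eauto). subst d.
    split.
    + rewrite (map_app (@key V)). simpl. apply fop_app; auto.
      intros y Hy. apply in_map_iff in Hy. destruct Hy as [r [<- Hin]].
      split; simpl. specialize (Hr r Hin); lia.
      intros Heq. exfalso. eapply H1; eauto.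
    + exists (rlev R0). split.
      * intros r Hin. apply in_app_or in Hin. destruct Hin as [Hin|[<-|[]]]; simpl; auto; lia.
      * intros R1 B1 vs1 Heq; injection Heq; intros; subst; auto.
  - assert (d = rlev R0) by (eapply Hc; eauto). subst d.
    split.
    + rewrite !map_app in *. simpl in *. unfold key at 2 in Hf. simpl in Hf.
      unfold key at 2. simpl. rewrite H1 in Hf. exact Hf.
    + exists (rlev R0). split.
      * intros r' Hin. apply in_app_or in Hin. destruct Hin as [Hin|[<-|Hin]]; simpl.
        -- apply Hr; apply in_or_app; auto.
        -- rewrite H2; lia.
        -- apply Hr; apply in_or_app; simpl; auto.
      * intros R1 B1 vs1 Heq; injection Heq; intros; subst; auto.
  - assert (d = rlev R0) by (eapply Hc; eauto). subst d.
    split.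
    + rewrite (map_app (@key V)). simpl. apply fop_app; auto.
      intros y Hy. apply in_map_iff in Hy. destruct Hy as [r [<- Hin]].
      split; simpl. specialize (Hr r Hin); lia.
      intros Heq. apply (H2 r Hin Heq).
    + exists (rlev R0). split.
      * intros r Hin. apply in_app_or in Hin. destruct Hin as [Hin|[<-|[]]]; simpl; auto; lia.
      * intros R1 B1 vs1 Heq; injection Heq; intros; subst; auto.
  - split; auto. exists d. split; auto.
    intros R1 B1 vs1 Heq; injection Heq; intros; subst. eapply Hc; eauto.
Qed.

Theorem lemma15 (V : Type) (E : list (tedge V)) (s : V) (ts : R)
  (HVfin : exists l : list V, forall x : V, In x l)
  (HEnodup : NoDup E)
  (HEloop : forall u v t, In (u, v, t) E -> u <> v)
  (st0 st : @state V) :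
  init_state s ts st0 -> reachable E st0 st ->
  forall v : V, at_most_two_of (sQ st) v.
Proof.
  intros Hinit Hreach.
  assert (HI : Inv st).
  { induction Hreach.
    - destruct Hinit as [HQ [_ [_ [_ [_ Hc]]]]]. split.
      + rewrite HQ. simpl. constructor; constructor.
      + exists 0%nat. split.
        * rewrite HQ. intros r [<-|[]]. simpl. lia.
        * rewrite Hc. intros; discriminate.
    - eapply inv_step; eauto. }
  destruct HI as [Hf [d [Hr _]]].
  intros v i j k r1 r2 r3 Hij Hjk H1 H2 H3 E1 E2 E3.
  assert (Hf' := fop_nth _ _ Hf).
  assert (P12 : Pk (key r1) (key r2)) by (apply (Hf' i j); auto; rewrite nth_error_map; rewrite ?H1, ?H2; reflexivity).
  assert (P23 : Pk (key r2) (key r3)) by (apply (Hf' j k); auto; rewrite nth_error_map; rewrite ?H2, ?H3; reflexivity).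
  destruct P12 as [a1 b1], P23 as [a2 b2]. unfold key in *; simpl in *.
  assert (rlev r1 <> rlev r2) by (apply b1; congruence).
  assert (rlev r2 <> rlev r3) by (apply b2; congruence).
  assert (d <= rlev r1 <= S d)%nat by (apply Hr; eapply nth_error_In; eauto).
  assert (d <= rlev r3 <= S d)%nat by (apply Hr; eapply nth_error_In; eauto).
  lia.
Qed.
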